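(* Let $(\mathbb{T},G)$ be a minimal equicontinuous topological dynamical system with $\mathbb{T}$ infinite, and let $\theta,\theta'\in\mathbb{T}$. Then every neighbourhood of the neutral element $e$ of $E(\mathbb{T})$ contains some $g\in G$ (regarded as an element of $E(\mathbb{T})$) with $g\theta\neq\theta$ and $g\theta'\neq\theta'$.
   Context: A topological dynamical system $(X,G)$ consists of a topological group $G$ acting jointly continuously on the left on a compact Hausdorff space $X$; we write $gx$ for the action. It is minimal if every orbit $Gx$ is dense in $X$, and equicontinuous if the family of maps $\{x\mapsto gx: g\in G\}$ is equicontinuous with respect to the unique uniformity of $X$. The Ellis semigroup $E(X)$ is the closure of $\{x\mapsto gx:g\in G\}$ in $X^X$ with the topology of pointwise convergence; elements of $G$ are regarded as elements of $E(X)$. For $(\mathbb{T},G)$ minimal and equicontinuous it is known that $E(\mathbb{T})$ is a compact Hausdorff topological group consisting of homeomorphisms of $\mathbb{T}$, acting jointly continuously and transitively on $\mathbb{T}$ and extending the action of $G$. *)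

(* Defs.v *)
From Stdlib Require Import List.
Import ListNotations.
Set Implicit Arguments.

Definition is_topology {X : Type} (op : (X -> Prop) -> Prop) : Prop :=
  op (fun _ => True) /\ op (fun _ => False) /\
  (forall U V, op U -> op V -> op (fun x => U x /\ V x)) /\
  (forall F : (X -> Prop) -> Prop, (forall U, F U -> op U) ->
     op (fun x => exists U, F U /\ U x)).

Definition prod_open {X Y : Type} (opX : (X -> Prop) -> Prop) (opY : (Y -> Prop) -> Prop)
  (W : X * Y -> Prop) : Prop :=
  forall p, W p -> exists U V, opX U /\ opY V /\ U (fst p) /\ V (snd p) /\
    forall a b, U a -> V b -> W (a, b).

Definition continuous {X Y : Type} (opX : (X -> Prop) -> Prop) (opY : (Y -> Prop) -> Prop)
  (f : X -> Y) : Prop :=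
  forall V, opY V -> opX (fun x => V (f x)).

Definition hausdorff {X : Type} (op : (X -> Prop) -> Prop) : Prop :=
  forall x y, x <> y -> exists U V, op U /\ op V /\ U x /\ V y /\
    forall z, U z -> V z -> False.

Definition compact {X : Type} (op : (X -> Prop) -> Prop) : Prop :=
  forall F : (X -> Prop) -> Prop, (forall U, F U -> op U) ->
    (forall x, exists U, F U /\ U x) ->
    exists l : list (X -> Prop), (forall U, In U l -> F U) /\
      forall x, exists U, In U l /\ U x.

Definition infinite_type (X : Type) : Prop :=
  ~ exists l : list X, forall x, In x l.

Definition topological_group {G : Type} (opG : (G -> Prop) -> Prop)
  (mul : G -> G -> G) (inv : G -> G) (e : G) : Prop :=
  is_topology opG /\
  (forall a b c, mul a (mul b c) = mul (mul a b) c) /\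
  (forall a, mul e a = a) /\ (forall a, mul a e = a) /\
  (forall a, mul (inv a) a = e) /\ (forall a, mul a (inv a) = e) /\
  continuous (prod_open opG opG) opG (fun p => mul (fst p) (snd p)) /\
  continuous opG opG inv.

Definition continuous_action {G X : Type} (opG : (G -> Prop) -> Prop)
  (opX : (X -> Prop) -> Prop) (mul : G -> G -> G) (e : G) (act : G -> X -> X) : Prop :=
  (forall x, act e x = x) /\
  (forall g h x, act (mul g h) x = act g (act h x)) /\
  continuous (prod_open opG opX) opX (fun p => act (fst p) (snd p)).

Definition minimal_action {G X : Type} (opX : (X -> Prop) -> Prop) (act : G -> X -> X) : Prop :=
  forall x U, opX U -> (exists y, U y) -> exists g, U (act g x).

(* Entourages of the unique uniformity of a compact Hausdorff space:
   the neighbourhoods of the diagonal in X * X. *)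
Definition entourage {X : Type} (opX : (X -> Prop) -> Prop) (V : X * X -> Prop) : Prop :=
  exists O, prod_open opX opX O /\ (forall x, O (x, x)) /\ forall p, O p -> V p.

Definition equicontinuous_action {G X : Type} (opX : (X -> Prop) -> Prop)
  (act : G -> X -> X) : Prop :=
  forall x V, entourage opX V ->
    exists U, opX U /\ U x /\ forall y g, U y -> V (act g x, act g y).

Definition pw_open {X : Type} (opX : (X -> Prop) -> Prop) (W : (X -> X) -> Prop) : Prop :=
  forall f, W f -> exists l : list (X * (X -> Prop)),
    (forall p, In p l -> opX (snd p) /\ snd p (f (fst p))) /\
    forall h, (forall p, In p l -> snd p (h (fst p))) -> W h.

Definition ellis {G X : Type} (opX : (X -> Prop) -> Prop) (act : G -> X -> X)
  (f : X -> X) : Prop :=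
  forall W, pw_open opX W -> W f -> exists g, W (act g).

Definition ellis_nbhd_id {G X : Type} (opX : (X -> Prop) -> Prop) (act : G -> X -> X)
  (N : (X -> X) -> Prop) : Prop :=
  (forall f, N f -> ellis opX act f) /\
  exists W, pw_open opX W /\ W (fun x => x) /\
    forall f, W f -> ellis opX act f -> N f.

(* Main.v *)
Require Import Defs.
From Stdlib Require Import List Classical ClassicalEpsilon FunctionalExtensionality PropExtensionality.
Import ListNotations.

Lemma op_ext {X} (op : (X->Prop)->Prop) (U V : X -> Prop) :
  op U -> (forall x, U x <-> V x) -> op V.
Proof.
  intros H E. replace V with U; auto. extensionality x.
  apply propositional_extensionality. apply E.
Qed.

Lemma open_local {X} (op : (X->Prop)->Prop) (P : X -> Prop) : is_topology op ->
  (forall y, P y -> exists W, op W /\ W y /\ forall u, W u -> P u) -> op P.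
Proof.
  intros (_&_&_&Hu) H.
  apply op_ext with (fun x => exists W, (op W /\ forall u, W u -> P u) /\ W x).
  - apply Hu. intros W [HW _]; exact HW.
  - intros x; split.
    + intros (W & (_ & HW) & Wx); auto.
    + intros Px. destruct (H x Px) as (W & HW & Wx & HWP). eauto.
Qed.

Lemma open_inter {X} (op : (X->Prop)->Prop) (U V : X->Prop) :
  is_topology op -> op U -> op V -> op (fun x => U x /\ V x).
Proof. intros (_&_&Hi&_); auto. Qed.

Lemma open_neq {X} (op : (X->Prop)->Prop) (z : X) :
  is_topology op -> hausdorff op -> op (fun y => y <> z).
Proof.
  intros Ht Hh. apply open_local; auto. intros y Hy.
  destruct (Hh y z Hy) as (U & V & HU & HV & Uy & Vz & D).
  exists U; repeat split; auto. intros u Uu E; subst; eauto.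
Qed.

Lemma open_notin {X} (op : (X->Prop)->Prop) (L : list X) :
  is_topology op -> hausdorff op -> op (fun y => ~ In y L).
Proof.
  intros Ht Hh. induction L as [|z L IH].
  - apply op_ext with (fun _ => True). apply Ht. simpl; tauto.
  - apply op_ext with (fun y => y <> z /\ ~ In y L).
    + apply open_inter; auto. apply open_neq; auto.
    + intros y; simpl; split.
      * intros [H1 H2] [H|H]; [congruence|tauto].
      * intros H; split; intros H'; apply H; auto.
Qed.

Lemma open_slice {G X} (opG : (G->Prop)->Prop) (opX : (X->Prop)->Prop)
  (act : G -> X -> X) (a : G) (V : X -> Prop) :
  is_topology opX -> continuous (prod_open opG opX) opX (fun p => act (fst p) (snd p)) ->
  opX V -> opX (fun y => V (act a y)).
Proof.
  intros Ht Hc HV. apply open_local; auto. intros y Hy.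
  destruct (Hc V HV (a, y) Hy) as (U & W & _ & HW & Ua & Wy & H).
  exists W; repeat split; auto. intros u Wu. exact (H a u Ua Wu).
Qed.

Lemma regular {X} (op : (X->Prop)->Prop) (x : X) (U : X -> Prop) :
  is_topology op -> compact op -> hausdorff op ->
  op U -> U x -> exists A B, op A /\ op B /\ A x /\
    (forall z, A z -> B z -> False) /\ (forall z, ~ U z -> B z).
Proof.
  intros Ht Hc Hh HU Ux.
  set (F := fun W => W = U \/ (op W /\ exists A, op A /\ A x /\ forall z, A z -> W z -> False)).
  assert (HFop : forall W, F W -> op W).
  { intros W [E|[H _]]; subst; auto. }
  destruct (Hc F HFop) as (l & Hl & Hcov).
  { intros z. destruct (classic (U z)) as [Uz|Uz].
    - exists U; split; auto. left; auto.
    - assert (E : x <> z) by (intros E; subst; auto).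
      destruct (Hh x z E) as (A & B & HA & HB & Ax & Bz & D).
      exists B; split; auto. right; split; auto. exists A; auto. }
  assert (Hind : forall l', (forall W, In W l' -> F W) -> exists A, op A /\ A x /\
     forall W, In W l' -> W = U \/ forall z, A z -> W z -> False).
  { induction l' as [|W l' IH]; intros HF.
    - exists (fun _ => True). split; [apply Ht|]. split; [exact I|]. intros W [].
    - destruct IH as (A & HA & Ax & HAl). { intros; apply HF; simpl; auto. }
      destruct (HF W (or_introl eq_refl)) as [E|(_ & A' & HA' & A'x & D)].
      + exists A; repeat split; auto. intros W' [E'|H]; auto. subst; auto.
      + exists (fun z => A z /\ A' z). split; [apply open_inter; auto|]. split; [auto|].
        intros W' [E'|H].
        * subst W'. right. intros z [Az Sz] Wz. eauto.
        * destruct (HAl W' H) as [E'|E']; auto. right; intros z [Az _]; eauto. }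
  destruct (Hind l Hl) as (A & HA & Ax & HAl).
  exists A, (fun z => exists W, In W l /\ (forall z', A z' -> W z' -> False) /\ W z).
  split; auto. split.
  - apply open_local; auto. intros y (W & HW & D & Wy). exists W. repeat split; eauto.
  - split; auto. split.
    + intros z Az (W & _ & D & Wz); eauto.
    + intros z Uz. destruct (Hcov z) as (W & HW & Wz).
      exists W; split; auto. split; auto.
      destruct (HAl W HW) as [E|E]; auto. subst; contradiction.
Qed.

Lemma cells {G X} (opG : (G->Prop)->Prop) (mul : G -> G -> G) (inv : G -> G) (e : G)
  (opX : (X->Prop)->Prop) (act : G -> X -> X) (x : X) (U : X -> Prop) :
  topological_group opG mul inv e -> is_topology opX -> compact opX -> hausdorff opX ->
  continuous_action opG opX mul e act -> equicontinuous_action opX act ->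
  opX U -> U x ->
  exists C : list (X -> Prop), (forall z, exists Q, In Q C /\ Q z) /\
    forall Q g g', In Q C -> Q (act g x) -> Q (act g' x) -> U (act (inv g) (act g' x)).
Proof.
  intros HG Ht Hc Hh Hact Heq HU Ux.
  destruct HG as (_ & _ & _ & _ & Hinvl & _).
  destruct Hact as (Hae & Ham & _).
  destruct (regular opX x U Ht Hc Hh HU Ux) as (A & B & HA & HB & Ax & D & HUB).
  set (O := fun p : X*X => (A (fst p) /\ A (snd p)) \/
     (U (fst p) /\ fst p <> x /\ U (snd p) /\ snd p <> x) \/ (B (fst p) /\ B (snd p))).
  assert (HAU : forall z, A z -> U z).
  { intros z Az. apply NNPP; intros nU. eauto. }
  assert (Hent : entourage opX O).
  { exists O. split; [|split; [|auto]].
    - intros p [[H1 H2]|[[H1 [H2 [H3 H4]]]|[H1 H2]]].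
      + exists A, A. repeat split; auto. intros a b Ha Hb; left; auto.
      + exists (fun w => U w /\ w <> x), (fun w => U w /\ w <> x).
        split; [apply open_inter; auto; apply open_neq; auto|].
        split; [apply open_inter; auto; apply open_neq; auto|].
        repeat split; auto. intros a b [? ?] [? ?]; right; left; simpl; auto.
      + exists B, B. repeat split; auto. intros a b Ha Hb; right; right; auto.
    - intros z. destruct (classic (A z)) as [Az|nA]. left; auto.
      destruct (classic (U z)) as [Uz|nU].
      + right; left; simpl. assert (z <> x) by (intros E; subst; auto). auto.
      + right; right; simpl; auto. }
  assert (Hkey : forall w y, O (w, x) -> O (w, y) -> U y).
  { intros w y [[H1 H2]|[[_ [_ [_ H]]]|[H1 H2]]] H'; simpl in *.
    - destruct H' as [[_ H]|[[_ [_ [H _]]]|[H3 _]]]; simpl in *; eauto. exfalso; eauto.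
    - congruence.
    - exfalso; eauto. }
  set (F := fun Q => opX Q /\ exists z, forall y g, Q y -> O (act g z, act g y)).
  destruct (Hc F) as (C & HC & Hcov).
  { intros Q [H _]; auto. }
  { intros z. destruct (Heq z O Hent) as (W & HW & Wz & HWp).
    exists W; split; auto. split; eauto. }
  exists C; split; auto.
  intros Q g g' HQ Q1 Q2. destruct (HC Q HQ) as (_ & z & Hz).
  apply (Hkey (act (inv g) z)).
  - assert (E : act (inv g) (act g x) = x) by (rewrite <- Ham, Hinvl, Hae; auto).
    rewrite <- E. apply Hz; auto.
  - apply Hz; auto.
Qed.

Lemma partition {G X} (opG : (G->Prop)->Prop) (mul : G -> G -> G) (inv : G -> G) (e : G)
  (opX : (X->Prop)->Prop) (act : G -> X -> X) :
  topological_group opG mul inv e -> is_topology opX -> compact opX -> hausdorff opX ->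
  continuous_action opG opX mul e act -> equicontinuous_action opX act ->
  forall l : list (X * (X -> Prop)), (forall p, In p l -> opX (snd p) /\ snd p (fst p)) ->
  exists T : list (G -> Prop), (forall g, exists P, In P T /\ P g) /\
    forall P, In P T -> forall g g', P g -> P g' ->
      forall p, In p l -> snd p (act (inv g) (act g' (fst p))).
Proof.
  intros HG Ht Hc Hh Hact Heq l. induction l as [|[x U] l IH]; intros Hl.
  - exists [fun _ => True]. split.
    + intros g; exists (fun _ => True); simpl; auto.
    + intros P _ g g' _ _ p [].
  - destruct IH as (T & HT1 & HT2). { intros; apply Hl; simpl; auto. }
    destruct (Hl (x, U) (or_introl eq_refl)) as [HU Ux]; simpl in HU, Ux.
    destruct (cells opG mul inv e opX act x U HG Ht Hc Hh Hact Heq HU Ux) as (C & HC1 & HC2).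
    exists (flat_map (fun P => map (fun Q => fun g => P g /\ Q (act g x)) C) T). split.
    + intros g. destruct (HT1 g) as (P & HP & Pg). destruct (HC1 (act g x)) as (Q & HQ & Qg).
      exists (fun g => P g /\ Q (act g x)). split; auto.
      apply in_flat_map. exists P; split; auto. apply in_map_iff. exists Q; auto.
    + intros P' HP' g g' Pg Pg'.
      apply in_flat_map in HP'. destruct HP' as (P & HP & HP').
      apply in_map_iff in HP'. destruct HP' as (Q & E & HQ). subst P'.
      destruct Pg as [Pg Qg0]. destruct Pg' as [Pg' Qg0'].
      intros p [E|Hp].
      * subst p; simpl. eauto.
      * eauto.
Qed.

Lemma moveP {G X} (opG : (G->Prop)->Prop) (mul : G -> G -> G) (inv : G -> G) (e : G)
  (opX : (X->Prop)->Prop) (act : G -> X -> X) :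
  topological_group opG mul inv e -> is_topology opX -> compact opX -> hausdorff opX ->
  continuous_action opG opX mul e act -> minimal_action opX act ->
  equicontinuous_action opX act -> infinite_type X ->
  forall (l : list (X * (X -> Prop))) (th : X),
  (forall p, In p l -> opX (snd p) /\ snd p (fst p)) ->
  exists g, (forall p, In p l -> snd p (act g (fst p))) /\ act g th <> th.
Proof.
  intros HG Ht Hc Hh Hact Hmin Heq Hinf l th Hl.
  apply NNPP; intros Hn.
  assert (S : forall h, (forall p, In p l -> snd p (act h (fst p))) -> act h th = th).
  { intros h Hp. apply NNPP; intros E. apply Hn; eauto. }
  destruct (partition opG mul inv e opX act HG Ht Hc Hh Hact Heq l Hl) as (T & HT1 & HT2).
  pose proof HG as (_ & _ & _ & _ & Hinvl & Hinvr & _).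
  pose proof Hact as (Hae & Ham & _).
  assert (HL : forall T', (forall P, In P T' -> In P T) ->
     exists L, forall P, In P T' -> forall g, P g -> In (act g th) L).
  { induction T' as [|P T' IH]; intros HT'.
    - exists []; intros P [].
    - destruct IH as (L & HL). { intros; apply HT'; simpl; auto. }
      destruct (classic (exists g0, P g0)) as [(g0 & Pg0)|NP].
      + exists (act g0 th :: L). intros P' [E|HP'] g Pg.
        * subst P'. left.
          assert (E : act (mul (inv g0) g) th = th).
          { apply S. intros p Hp. rewrite Ham. apply (HT2 P); auto. apply HT'; simpl; auto. }
          rewrite Ham in E. rewrite <- E at 1. rewrite <- Ham, Hinvr, Hae. reflexivity.
        * right; eauto.
      + exists L. intros P' [E|HP'] g Pg.
        * subst P'. exfalso; eauto.
        * eauto. }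
  destruct (HL T (fun P H => H)) as (L & HL').
  apply Hinf. exists L. intros x. apply NNPP; intros nx.
  destruct (Hmin th (fun y => ~ In y L) (open_notin opX L Ht Hh) (ex_intro _ x nx)) as (g & Hg).
  apply Hg. destruct (HT1 g) as (P & HP & Pg). eauto.
Qed.

Theorem mainTheorem3 (G X : Type) (opG : (G -> Prop) -> Prop)
  (mul : G -> G -> G) (inv : G -> G) (e : G)
  (opX : (X -> Prop) -> Prop) (act : G -> X -> X)
  (HG : topological_group opG mul inv e)
  (HXtop : is_topology opX) (HXc : compact opX) (HXh : hausdorff opX)
  (Hact : continuous_action opG opX mul e act)
  (Hmin : minimal_action opX act)
  (Heq : equicontinuous_action opX act)
  (Hinf : infinite_type X)
  (theta theta' : X)
  (N : (X -> X) -> Prop) (HN : ellis_nbhd_id opX act N) :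
  exists g : G, N (act g) /\ act g theta <> theta /\ act g theta' <> theta'.
Proof.
  destruct HN as (_ & W & HW & Wid & HWN).
  destruct (HW (fun x => x) Wid) as (l & Hl & Hlw).
  pose proof Hact as (Hae & Ham & Hac).
  assert (HNg : forall g, (forall p, In p l -> snd p (act g (fst p))) -> N (act g)).
  { intros g Hg. apply HWN. apply Hlw; auto. intros W' _ HW'. eauto. }
  destruct (moveP opG mul inv e opX act HG HXtop HXc HXh Hact Hmin Heq Hinf l theta Hl)
    as (a & Ha & Hath).
  destruct (classic (act a theta' = theta')) as [Ea|Na].
  2:{ exists a; auto. }
  set (l' := map (fun p => (fst p, fun y => snd p (act a y))) l ++
             [(theta, fun y => act a y <> theta)]).
  destruct (moveP opG mul inv e opX act HG HXtop HXc HXh Hact Hmin Heq Hinf l' theta')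
    as (b & Hb & Hbth).
  { intros p Hp. apply in_app_or in Hp. destruct Hp as [Hp|[Hp|[]]].
    - apply in_map_iff in Hp. destruct Hp as (q & E & Hq). subst p; simpl.
      destruct (Hl q Hq) as [Hq1 Hq2]. split.
      + apply (open_slice opG opX act a _ HXtop Hac Hq1).
      + apply Ha; auto.
    - subst p; simpl. split; auto.
      apply (open_slice opG opX act a (fun y => y <> theta) HXtop Hac).
      apply open_neq; auto. }
  exists (mul a b). split; [|split].
  - apply HNg. intros p Hp. rewrite Ham.
    apply (Hb (fst p, fun y => snd p (act a y))). apply in_or_app; left.
    apply in_map_iff. exists p; auto.
  - rewrite Ham. apply (Hb (theta, fun y => act a y <> theta)). apply in_or_app; right; simpl; auto.
  - rewrite Ham. intros E. apply Hbth.
    destruct HG as (_ & _ & _ & _ & Hinvl & _).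
    assert (H : forall y, act (inv a) (act a y) = y) by (intros; rewrite <- Ham, Hinvl, Hae; auto).
    rewrite <- (H (act b theta')), E. rewrite <- Ea at 1. apply H.
Qed.
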